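(* The following sequence is exact: $$0\rightarrow H_1(S, \mathbb R)\xrightarrow{f_3} \mathcal K_\tau \xrightarrow{f_2} \widetilde{\mathcal T}_\lambda \xrightarrow{f_1} \mathbb R \rightarrow 0.$$
   Context: Let $S$ be an oriented surface of genus $g$ with $p\geq 1$ punctures and $m=2g-2+p>0$. Let $\tau$ be a decorated ideal triangulation of $S$: an ideal triangulation whose ideal triangles are numbered $\tau_1,\dots,\tau_{2m}$, each with a marked corner. The three sides of each $\tau_\mu$ are numbered $0,1,2$ in counterclockwise order, the $0$-side being opposite the marked corner. Let $\lambda$ be the underlying ideal triangulation (forget the marks), with edges $\lambda_1,\dots,\lambda_{3m}$ and dual edges $\lambda_1^*,\dots,\lambda_{3m}^*$ in the dual graph (whose vertices $\tau_\mu^*$ correspond to the triangles). $\mathcal K_\tau=\mathbb R^{4m}=\{(\ln y_1,\ln z_1,\dots,\ln y_{2m},\ln z_{2m})\}$ is the space of Kashaev coordinates. To such a vector assign to the sides of $\tau_\mu$ the numbers $\ln h_\mu^0=\ln y_\mu-\ln z_\mu$, $\ln h_\mu^1=\ln z_\mu$, $\ln h_\mu^2=-\ln y_\mu$; this identifies $\mathcal K_\tau$ with the subspace of $\mathbb R^{6m}=\{(\dots,\ln h_\mu^0,\ln h_\mu^1,\ln h_\mu^2,\dots)\}$ defined by $\ln h_\mu^0+\ln h_\mu^1+\ln h_\mu^2=0$ for every $\mu$. $\widetilde{\mathcal T}_\lambda=\mathbb R^{3m}=\{(\ln x_1,\dots,\ln x_{3m})\}$ is the enhanced Teichmüller space parametrized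 by shear coordinates, $\ln x_i$ being the shear coordinate at edge $\lambda_i$. The maps are: $f_1(\ln x_1,\dots,\ln x_{3m})=\sum_{i=1}^{3m}\ln x_i$; $f_2$ is the linear map given by $\ln x_i=\ln h_\mu^s+\ln h_\nu^t$ whenever $\lambda_i$ bounds the $s$-side of $\tau_\mu$ and the $t$-side of $\tau_\nu$ ($\mu$ may equal $\nu$); $f_3$ sends a homology class represented by $\sum_{i=1}^{3m}c_i\lambda_i^*$ (oriented dual edges) to the vector obtained by setting $\ln h_\mu^s=-c_i$ and $\ln h_\nu^t=c_i$ whenever $\lambda_i^*$ is oriented from the $s$-side of $\tau_\mu$ to the $t$-side of $\tau_\nu$ (this vector lies in $\mathcal K_\tau$ because the chain is a cycle). *)

(* Defs.v *)
From HB Require Import structures.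
From mathcomp Require Import all_boot all_order all_algebra.
From mathcomp Require Import reals.
Set Implicit Arguments. Unset Strict Implicit. Unset Printing Implicit Defensive.
Import Order.TTheory GRing.Theory Num.Theory.
Local Open Scope ring_scope.

(* Combinatorial model of a decorated ideal triangulation tau with 2m
   triangles tau_mu (mu : 'I_(2 * m)) and 3m edges lambda_i (i : 'I_(3 * m)).
   A side is a pair (mu, s): the s-side of tau_mu, s in {0,1,2} numbered
   counterclockwise with the 0-side opposite the marked corner.
   The gluing is given by [ep : dedge m -> side m]: the oriented dual edge
   lambda_i^* goes from the side [ep (i,false)] to the side [ep (i,true)];
   these are the two sides bounding lambda_i.  [ep] must be a bijection
   (every side is glued to exactly one other side), and the dual graph must
   be connected (S is connected). *)

Definition side (m : nat) := ('I_(2 * m) * 'I_3)%type.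
Definition dedge (m : nat) := ('I_(3 * m) * bool)%type.

Definition dual_adj (m : nat) (ep : dedge m -> side m) : rel 'I_(2 * m) :=
  fun mu nu => [exists i : 'I_(3 * m),
     (((ep (i, false)).1 == mu) && ((ep (i, true)).1 == nu))
  || (((ep (i, false)).1 == nu) && ((ep (i, true)).1 == mu))].

Definition decorated_triangulation (m : nat) (ep : dedge m -> side m) : Prop :=
  bijective ep /\ (forall mu nu : 'I_(2 * m), connect (dual_adj ep) mu nu).

(* H_1(S,R) is realised as the cycle space of the dual graph (a deformation
   retract of S): real chains sum_i c_i lambda_i^* with zero boundary. *)
Definition is_cycle (R : realType) (m : nat) (ep : dedge m -> side m)
  (c : 'I_(3 * m) -> R) : Prop :=
  forall mu : 'I_(2 * m),
    \sum_(i < 3 * m | (ep (i, true)).1 == mu) c i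
    - \sum_(i < 3 * m | (ep (i, false)).1 == mu) c i = 0.

(* Kashaev coordinates: mu |-> (ln y_mu, ln z_mu) *)
Definition kash (R : realType) (m : nat) := 'I_(2 * m) -> (R * R)%type.

(* the associated numbers ln h_mu^s on the sides *)
Definition h_of (R : realType) (m : nat) (k : kash R m) (sd : side m) : R :=
  let: (mu, s) := sd in
  if val s == 0%N then (k mu).1 - (k mu).2
  else if val s == 1%N then (k mu).2
  else - (k mu).1.

Definition f1 (R : realType) (m : nat) (x : 'I_(3 * m) -> R) : R :=
  \sum_(i < 3 * m) x i.

Definition f2 (R : realType) (m : nat) (ep : dedge m -> side m)
  (k : kash R m) : 'I_(3 * m) -> R :=
  fun i => h_of k (ep (i, false)) + h_of k (ep (i, true)).

(* f_3 on chains: the vector in R^{6m}: ln h = -c_i at the start side of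
   lambda_i^*, +c_i at its end side (unique by bijectivity of ep) ... *)
Definition f3_h (R : realType) (m : nat) (ep : dedge m -> side m)
  (c : 'I_(3 * m) -> R) (sd : side m) : R :=
  \sum_(d : dedge m | ep d == sd) (if d.2 then c d.1 else - c d.1).

Definition f3 (R : realType) (m : nat) (ep : dedge m -> side m)
  (c : 'I_(3 * m) -> R) : kash R m :=
  fun mu => (- f3_h ep c (mu, inord 2), f3_h ep c (mu, inord 1)).

(* Main.v *)
Require Import Defs.
From HB Require Import structures.
From mathcomp Require Import all_boot all_order all_algebra.
From mathcomp Require Import reals.
From Stdlib Require Import FunctionalExtensionality.
Set Implicit Arguments. Unset Strict Implicit.
From mathcomp Require Import lra.
Import GRing.Theory Num.Theory.
Local Open Scope ring_scope.

Definition divc (R : realType) (m : nat) (ep : dedge m -> side m)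
  (c : 'I_(3 * m) -> R) (nu : 'I_(2 * m)) : R :=
  \sum_(i < 3 * m | (ep (i, true)).1 == nu) c i
    - \sum_(i < 3 * m | (ep (i, false)).1 == nu) c i.

Definition sgn (R : realType) (m : nat) (c : 'I_(3 * m) -> R) (d : dedge m) : R :=
  if d.2 then c d.1 else - c d.1.

Lemma sum_ind (R : realType) n (C : pred 'I_n) (i : 'I_n) (t : R) :
  \sum_(j < n | C j) (if j == i then t else 0) = if C i then t else 0.
Proof.
rewrite big_mkcond /= (bigD1 i) //= eqxx big1 ?addr0 // => j /negbTE ->.
by case: (C j).
Qed.

Lemma divc_ind (R : realType) m ep (i : 'I_(3 * m)) (t : R) nu :
  divc ep (fun j => if j == i then t else 0) nu =
  ((ep (i, true)).1 == nu)%:R * t - ((ep (i, false)).1 == nu)%:R * t.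
Proof.
rewrite /divc !sum_ind.
by case: ((ep (i, true)).1 == nu); case: ((ep (i, false)).1 == nu);
  rewrite ?mul1r ?mul0r.
Qed.

Lemma divcD (R : realType) m ep (c1 c2 : 'I_(3 * m) -> R) nu :
  divc ep (fun j => c1 j + c2 j) nu = divc ep c1 nu + divc ep c2 nu.
Proof. rewrite /divc !big_split /=; lra. Qed.

Lemma divcZ (R : realType) m ep (a : R) (c : 'I_(3 * m) -> R) nu :
  divc ep (fun j => a * c j) nu = a * divc ep c nu.
Proof. by rewrite /divc mulrBr !mulr_sumr. Qed.

Lemma divc0 (R : realType) m ep nu :
  divc ep (fun _ : 'I_(3 * m) => 0 : R) nu = 0.
Proof. by rewrite /divc !big1 ?subr0. Qed.

Lemma path_chain (R : realType) m (ep : dedge m -> side m) p a :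
  path (dual_adj ep) a p -> exists P : 'I_(3 * m) -> R,
    forall nu, divc ep P nu = (nu == last a p)%:R - (nu == a)%:R.
Proof.
elim: p a => [|b p IH] a /=.
  by move=> _; exists (fun _ => 0) => nu; rewrite divc0 subrr.
case/andP => /existsP [i Hi] /IH [P HP].
have [Q HQ] : exists Q : 'I_(3 * m) -> R,
    forall nu, divc ep Q nu = (nu == b)%:R - (nu == a)%:R.
  case/orP: Hi => /andP [/eqP Ha /eqP Hb].
    exists (fun j => if j == i then 1 else 0) => nu.
    by rewrite divc_ind Ha Hb !mulr1 ![_ == nu]eq_sym.
  exists (fun j => if j == i then -1 else 0) => nu.
  rewrite divc_ind Ha Hb ![_ == nu]eq_sym; lra.
exists (fun j => P j + Q j) => nu; rewrite divcD HP HQ; lra.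
Qed.

Lemma div_surj (R : realType) m (ep : dedge m -> side m) (root : 'I_(2 * m))
  (v : 'I_(2 * m) -> R) :
  (forall mu nu, connect (dual_adj ep) mu nu) ->
  \sum_mu v mu = 0 -> exists c, forall nu, divc ep c nu = v nu.
Proof.
move=> Hc Hs.
have key : forall s : seq 'I_(2 * m), exists c, forall nu,
    divc ep c nu = \sum_(mu <- s) v mu * ((nu == mu)%:R - (nu == root)%:R).
  elim=> [|mu s [c Hc']].
    by exists (fun _ => 0) => nu; rewrite divc0 big_nil.
  have /connectP [p Hp Hl] := Hc root mu.
  have [P HP] := path_chain R Hp.
  exists (fun j => v mu * P j + c j) => nu.
  by rewrite divcD divcZ HP -Hl Hc' big_cons.
have [c Hc'] := key (index_enum _).
exists c => nu; rewrite Hc'.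
rewrite (eq_bigr (fun mu => v mu * (nu == mu)%:R - v mu * (nu == root)%:R));
  last by move=> *; rewrite mulrBr.
rewrite sumrB -mulr_suml Hs mul0r subr0.
rewrite (bigD1 nu) //= eqxx mulr1 big1 ?addr0 // => mu /negbTE.
by rewrite eq_sym => ->; rewrite mulr0.
Qed.

Lemma sum_side (R : realType) m (ep : dedge m -> side m) (F : side m -> R) mu :
  bijective ep ->
  \sum_(s < 3) F (mu, s) = \sum_(d : dedge m | (ep d).1 == mu) F (ep d).
Proof.
move=> Hb.
rewrite -(reindex ep (P := fun sd : side m => sd.1 == mu) (F := F)); last exact: onW_bij.
rewrite -(big_pred1_eq (@GRing.add R) mu (fun i => \sum_(s < 3) F (i, s))).
rewrite (pair_big_dep (fun i => i == mu) (fun _ _ => true) (fun i s => F (i, s))).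
by apply: eq_big => [[a b]|[a b]] //=; rewrite andbT.
Qed.

Lemma sum_dedge (R : realType) m (ep : dedge m -> side m) (G : dedge m -> R) mu :
  \sum_(d : dedge m | (ep d).1 == mu) G d =
  \sum_(i < 3 * m | (ep (i, true)).1 == mu) G (i, true)
  + \sum_(i < 3 * m | (ep (i, false)).1 == mu) G (i, false).
Proof.
transitivity (\sum_(i < 3 * m) \sum_(b : bool) (if (ep (i, b)).1 == mu then G (i, b) else 0)).
  by rewrite big_mkcond pair_big; apply: eq_big => [[]|[]].
rewrite (big_mkcond (fun i => _ == mu)) (big_mkcond (fun i => (ep (i, false)).1 == mu)) -big_split /=.
by apply: eq_bigr => i _; rewrite big_bool.
Qed.

Lemma sum_all_dedge (R : realType) m (G : dedge m -> R) :
  \sum_(d : dedge m) G d = \sum_(i < 3 * m) (G (i, false) + G (i, true)).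
Proof.
transitivity (\sum_(i < 3 * m) \sum_(b : bool) G (i, b)).
  by rewrite pair_big; apply: eq_big => [[]|[]].
by apply: eq_bigr => i _; rewrite big_bool addrC.
Qed.

Lemma sum_all_side (R : realType) m (F : side m -> R) :
  \sum_(sd : side m) F sd = \sum_(mu < 2 * m) \sum_(s < 3) F (mu, s).
Proof. by rewrite pair_big; apply: eq_big => [[]|[]]. Qed.

Lemma f3_hE (R : realType) m (ep : dedge m -> side m) g (c : 'I_(3 * m) -> R) sd :
  cancel ep g -> cancel g ep -> f3_h ep c sd = sgn c (g sd).
Proof.
move=> epK gK; rewrite /f3_h (big_pred1 (g sd)) // => d /=.
apply/eqP/eqP => [<-|->]; by rewrite ?epK ?gK.
Qed.

Lemma sum3 (R : realType) (F : 'I_3 -> R) :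
  \sum_(s < 3) F s = F (inord 0) + F (inord 1) + F (inord 2).
Proof.
rewrite !big_ord_recr big_ord0 /= add0r.
congr (F _ + F _ + F _); apply/val_inj; rewrite /= inordK //.
Qed.

Lemma h_of0 (R : realType) m (k : kash R m) mu : h_of k (mu, inord 0) = (k mu).1 - (k mu).2.
Proof. by rewrite /h_of /= inordK. Qed.
Lemma h_of1 (R : realType) m (k : kash R m) mu : h_of k (mu, inord 1) = (k mu).2.
Proof. by rewrite /h_of /= inordK. Qed.
Lemma h_of2 (R : realType) m (k : kash R m) mu : h_of k (mu, inord 2) = - (k mu).1.
Proof. by rewrite /h_of /= inordK. Qed.

Lemma ord3_cases (s : 'I_3) : [\/ s = inord 0, s = inord 1 | s = inord 2].
Proof.
case: s => [[|[|[|n]]] Hs]; [constructor 1|constructor 2|constructor 3|by []];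
  by apply/val_inj; rewrite /= inordK.
Qed.

Lemma divc_sgn (R : realType) m (ep : dedge m -> side m) (c : 'I_(3 * m) -> R) mu :
  divc ep c mu = \sum_(d : dedge m | (ep d).1 == mu) sgn c d.
Proof. by rewrite sum_dedge /sgn /= sumrN. Qed.

Lemma tri_f3 (R : realType) m (ep : dedge m -> side m) g (c : 'I_(3 * m) -> R) mu :
  cancel ep g -> cancel g ep ->
  \sum_(s < 3) f3_h ep c (mu, s) = divc ep c mu.
Proof.
move=> epK gK; rewrite (@sum_side R m ep (f3_h ep c)); last by exists g.
rewrite divc_sgn; apply: eq_bigr => d _; by rewrite (f3_hE _ _ epK gK) epK.
Qed.

Theorem theorem4p1 (R : realType) (m : nat) (ep : dedge m -> side m) :
  (0 < m)%N -> decorated_triangulation ep ->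
  [/\ (* exactness at H_1(S,R): f_3 injective on cycles *)
      (forall c : 'I_(3 * m) -> R, is_cycle ep c ->
         f3 ep c = (fun _ => (0, 0)) -> c = (fun _ => 0)),
      (* exactness at K_tau: ker f_2 = f_3(H_1) *)
      (forall k : kash R m,
         f2 ep k = (fun _ => 0) <-> exists2 c, is_cycle ep c & f3 ep c = k),
      (* exactness at T_lambda: ker f_1 = im f_2 *)
      (forall x : 'I_(3 * m) -> R, f1 x = 0 <-> exists k : kash R m, f2 ep k = x)
    & (* exactness at R: f_1 surjective *)
      (forall r : R, exists x : 'I_(3 * m) -> R, f1 x = r)].
Proof.
move=> m0 [Hb Hconn]; have [g epK gK] := Hb.
have Tsum : forall F : side m -> R, forall mu,
    \sum_(s < 3) F (mu, s) = \sum_(d : dedge m | (ep d).1 == mu) F (ep d).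
  by move=> F mu; apply: sum_side.
split.
- move=> c Hc Hf.
  have Hz : forall sd, f3_h ep c sd = 0.
    case=> mu s.
    have := congr1 (fun k => k mu) Hf; rewrite /f3 => -[H2 H1].
    have H2' : f3_h ep c (mu, inord 2) = 0 by rewrite -[LHS]opprK H2 oppr0.
    have := tri_f3 c mu epK gK; rewrite sum3 /divc (Hc mu) H1 H2' !addr0 => H0.
    by case: (ord3_cases s) => ->.
  apply: functional_extensionality => i.
  by have := Hz (ep (i, true)); rewrite (f3_hE _ _ epK gK) epK.
- move=> k; split.
  + move=> Hf.
    pose c := fun i => h_of k (ep (i, true)).
    have Hs : forall d, sgn c d = h_of k (ep d).
      case=> i [] //=.
      have := congr1 (fun f => f i) Hf; rewrite /f2 /c /= => H.
      rewrite /sgn /c /=; move: H; lra.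
    exists c.
      move=> mu; rewrite -/(divc ep c mu) (divc_sgn ep c mu).
      under eq_bigr do rewrite Hs.
      rewrite -Tsum sum3 h_of0 h_of1 h_of2; lra.
    apply: functional_extensionality => mu.
    rewrite /f3 !(f3_hE _ _ epK gK) !Hs !gK h_of2 h_of1 opprK.
    by case: (k mu).
  + case=> c Hc <-.
    have Hh : forall sd, h_of (f3 ep c) sd = f3_h ep c sd.
      case=> mu s; case: (ord3_cases s) => ->.
      * rewrite h_of0 /f3 /=.
        have := tri_f3 c mu epK gK; rewrite sum3 /divc (Hc mu) => H; lra.
      * by rewrite h_of1.
      * by rewrite h_of2 /= opprK.
    apply: functional_extensionality => i.
    by rewrite /f2 !Hh !(f3_hE _ _ epK gK) !epK /sgn /= addNr.
- move=> x; split.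
  + move=> Hf.
    pose v := fun mu : 'I_(2 * m) => \sum_(i < 3 * m | (ep (i, true)).1 == mu) x i.
    have Hv : \sum_mu v mu = 0.
      rewrite -[RHS]Hf /f1 (partition_big (fun i => (ep (i, true)).1) xpredT) //.
    have m2 : (0 < 2 * m)%N by rewrite muln_gt0 m0.
    have Hv' : \sum_mu - v mu = 0 by rewrite sumrN Hv oppr0.
    have [c Hc] := div_surj (Ordinal m2) (v := fun mu => - v mu) Hconn
       Hv'.
    pose H := fun d : dedge m => (if d.2 then x d.1 else 0) + sgn c d.
    pose h := fun sd => H (g sd).
    have Tri : forall mu, \sum_(s < 3) h (mu, s) = 0.
      move=> mu; rewrite Tsum.
      under eq_bigr do rewrite /h epK.
      rewrite /H big_split /= -divc_sgn Hc sum_dedge /=.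
      by rewrite big1_eq addr0 subrr.
    pose k := fun mu : 'I_(2 * m) => (- h (mu, inord 2), h (mu, inord 1)).
    have hk : forall sd, h_of k sd = h sd.
      case=> mu s; have := Tri mu; rewrite sum3 => T.
      case: (ord3_cases s) => ->.
      * rewrite h_of0 /k /=; lra.
      * by rewrite h_of1.
      * by rewrite h_of2 /= opprK.
    exists k; apply: functional_extensionality => i.
    rewrite /f2 !hk /h !epK /H /sgn /=; lra.
  + case=> k <-.
    rewrite /f1 /f2.
    rewrite (eq_bigr (fun i => (fun d => h_of k (ep d)) (i, false) + (fun d => h_of k (ep d)) (i, true))) //.
    rewrite -(sum_all_dedge (fun d => h_of k (ep d))).
    rewrite -(reindex ep (P := xpredT) (F := h_of k)); last exact: onW_bij.
    rewrite sum_all_side big1 // => mu _.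
    by rewrite sum3 h_of0 h_of1 h_of2; lra.
- move=> r.
  have m3 : (0 < 3 * m)%N by rewrite muln_gt0 m0.
  exists (fun j => if j == Ordinal m3 then r else 0).
  exact: (sum_ind xpredT (Ordinal m3) r).
Qed.
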